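(* Let $K\subseteq\mathbb R^d$ be a compact set satisfying LMI($1$). For every $k\in\mathbb N$ there is $C_k>0$ such that for all $\varepsilon\in(0,1)$, $x\in\partial K$, $r>0$ and every polynomial $P$ of degree at most $k$, \[\sum_{|\alpha|=k}\frac{|\partial^\alpha P(0)|}{\alpha!}\le\frac{C_k}{r^k}\sup\{|P(y)|:y\in A_{x,\varepsilon},\ |y|\le r\}.\]
   Context: $A_{x,\varepsilon}=\varepsilon^{-1}(K-x)\cup\{y\in\mathbb R^d:|y|\ge\varepsilon^{-1}\}$. $K$ satisfies LMI($1$) if there are $\varepsilon_0>0$ and constants $c_k\ge1$ such that for every $k$, every polynomial $P$ of degree $\le k$, every $\varepsilon\in(0,\varepsilon_0)$ and every $x_0\in K$: $|\nabla P(x_0)|\le c_k\varepsilon^{-1}\sup\{|P(y)|:y\in B(x_0,\varepsilon)\cap K\}$ ($B$ the closed ball). *)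

(* Defs.v *)
From HB Require Import structures.
From mathcomp Require Import all_boot all_order all_algebra.
From mathcomp Require Import all_classical all_reals all_analysis.
From mathcomp Require mpoly.
Set Implicit Arguments. Unset Strict Implicit. Unset Printing Implicit Defensive.
Import Order.TTheory GRing.Theory Num.Theory.
Import numFieldNormedType.Exports.
Local Open Scope classical_set_scope.
Local Open Scope ring_scope.

Section Defs.
Variables (R : realType) (d : nat).

Definition enorm (y : 'rV[R]_d) : R := Num.sqrt (\sum_(i < d) y 0 i ^+ 2).

Definition cball (x : 'rV[R]_d) (e : R) : set 'rV[R]_d :=
  [set y | enorm (y - x) <= e].

Definition peval (P : mpoly.mpoly d R) (y : 'rV[R]_d) : R :=
  mpoly.meval (fun i => y 0 i) P.

(* total degree of P is at most k (the zero polynomial has every degree bound) *)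
Definition deg_le (P : mpoly.mpoly d R) (k : nat) : Prop :=
  (\max_(m <- mpoly.msupp P) (mpoly.mdeg m).+1 <= k.+1)%N.

Definition grad_norm (P : mpoly.mpoly d R) (x : 'rV[R]_d) : R :=
  Num.sqrt (\sum_(i < d) (peval (mpoly.mderiv i P) x) ^+ 2).

Definition pderiv (a : mpoly.multinom d) (P : mpoly.mpoly d R) : mpoly.mpoly d R :=
  mpoly.mderivm a P.

Definition mfact (a : mpoly.multinom d) : nat := (\prod_(i < d) (mpoly.fun_of_multinom a i)`!)%N.

Definition mnm_of (k : nat) (f : {ffun 'I_d -> 'I_k}) : mpoly.multinom d :=
  mpoly.Multinom [tuple nat_of_ord (f i) | i < d].

Definition LMI1 (K : set 'rV[R]_d) : Prop :=
  exists eps0 : R, 0 < eps0 /\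
  exists c : nat -> R, (forall k, 1 <= c k) /\
  forall (k : nat) (P : mpoly.mpoly d R), deg_le P k ->
  forall eps : R, 0 < eps -> eps < eps0 ->
  forall x0, K x0 ->
    grad_norm P x0 <= c k * eps^-1 *
      sup [set `|peval P y| | y in cball x0 eps `&` K].

Definition Aset (K : set 'rV[R]_d) (x : 'rV[R]_d) (eps : R) : set 'rV[R]_d :=
  [set eps^-1 *: (z - x) | z in K] `|` [set y | eps^-1 <= enorm y].

Definition bdry (K : set 'rV[R]_d) : set 'rV[R]_d := closure K `\` interior K.

End Defs.

(* Main.v *)
Require Import Defs.
From HB Require Import structures.
From mathcomp Require Import all_boot all_order all_algebra.
From mathcomp Require Import mpoly.
From mathcomp Require Import all_classical all_reals all_analysis.
From mathcomp Require Import ring lra.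
Import Order.TTheory GRing.Theory Num.Theory.
Import numFieldNormedType.Exports.
Local Open Scope classical_set_scope.
Local Open Scope ring_scope.
Set Implicit Arguments. Unset Strict Implicit. Unset Printing Implicit Defensive.
Section Enorm.
Variables (R : realType) (d : nat).
Implicit Types (y z : 'rV[R]_d).

Lemma sum_sq_ge0 (a : 'I_d -> R) : 0 <= \sum_i a i ^+ 2.
Proof. by apply: sumr_ge0 => i _; rewrite sqr_ge0. Qed.

Lemma enorm_ge0 y : 0 <= enorm y.
Proof. exact: sqrtr_ge0. Qed.

Lemma enorm_sqr y : enorm y ^+ 2 = \sum_i y 0 i ^+ 2.
Proof. by rewrite /enorm sqr_sqrtr // sum_sq_ge0. Qed.

Lemma le_sqrt_sum (a : 'I_d -> R) i : `|a i| <= Num.sqrt (\sum_j a j ^+ 2).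
Proof.
rewrite -sqrtr_sqr ler_sqrt ?sum_sq_ge0 // (bigD1 i) //= lerDl.
by apply: sumr_ge0 => j _; rewrite sqr_ge0.
Qed.

Lemma enorm_coord y i : `|y 0 i| <= enorm y.
Proof. exact: le_sqrt_sum. Qed.

Lemma enormZ (c : R) y : enorm (c *: y) = `|c| * enorm y.
Proof.
rewrite /enorm (eq_bigr (fun i => c ^+ 2 * y 0 i ^+ 2)); last first.
  by move=> i _; rewrite mxE exprMn.
by rewrite -mulr_sumr sqrtrM ?sqr_ge0 // sqrtr_sqr.
Qed.

Lemma enormN y : enorm (- y) = enorm y.
Proof. by rewrite -scaleN1r enormZ normrN normr1 mul1r. Qed.

Lemma enorm_subC y z : enorm (y - z) = enorm (z - y).
Proof. by rewrite -enormN opprB. Qed.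

Lemma enorm0 : enorm (0 : 'rV[R]_d) = 0.
Proof.
rewrite /enorm (eq_bigr (fun _ => 0)) ?big1 ?sqrtr0 // => i _.
by rewrite mxE expr0n.
Qed.

Lemma sum_prod_sep (f g : 'I_d -> R) :
  \sum_i \sum_j f i * g j = (\sum_i f i) * (\sum_j g j).
Proof. by rewrite mulr_suml; apply: eq_bigr => i _; rewrite mulr_sumr. Qed.

Lemma cauchy_schwarz (a b : 'I_d -> R) :
  (\sum_i a i * b i) ^+ 2 <= (\sum_i a i ^+ 2) * (\sum_i b i ^+ 2).
Proof.
have H : 0 <= \sum_i \sum_j (a i * b j - a j * b i) ^+ 2.
  by apply: sumr_ge0 => i _; apply: sumr_ge0 => j _; rewrite sqr_ge0.
have E : \sum_i \sum_j (a i * b j - a j * b i) ^+ 2 =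
   \sum_i \sum_j (a i ^+ 2 * b j ^+ 2) + \sum_i \sum_j (b i ^+ 2 * a j ^+ 2)
   - \sum_i \sum_j (2 * (a i * b i) * (a j * b j)).
  rewrite -big_split -sumrB; apply: eq_bigr => i _.
  rewrite -big_split -sumrB; apply: eq_bigr => j _ /=; ring.
rewrite E !sum_prod_sep -mulr_sumr in H.
rewrite -subr_ge0; move: H.
set A := \sum_i a i ^+ 2; set B := \sum_i b i ^+ 2; set C := \sum_i a i * b i.
have -> : A * B + B * A - 2 * C * C = 2 * (A * B - C ^+ 2) by ring.
by rewrite pmulr_rge0.
Qed.

Lemma enorm_triangle y z : enorm (y + z) <= enorm y + enorm z.
Proof.
have Hy := enorm_ge0 y; have Hz := enorm_ge0 z.
rewrite -(ler_pXn2r (isT : (0 < 2)%N)) ?nnegrE ?addr_ge0 ?enorm_ge0 //.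
rewrite enorm_sqr (eq_bigr (fun i => y 0 i ^+ 2 + z 0 i ^+ 2 + 2 * (y 0 i * z 0 i)));
  last by move=> i _; rewrite mxE; ring.
rewrite !big_split /= -mulr_sumr -!enorm_sqr.
have CS : \sum_i y 0 i * z 0 i <= enorm y * enorm z.
  apply: le_trans (ler_norm _) _.
  rewrite -(ler_pXn2r (isT : (0 < 2)%N)) ?nnegrE ?mulr_ge0 //.
  by rewrite real_normK ?num_real // exprMn !enorm_sqr; apply: cauchy_schwarz.
rewrite sqrrD; lra.
Qed.

End Enorm.

Section Enorm2.
Variables (R : realType) (d : nat).
Implicit Types (y z : 'rV[R]_d).

Lemma enorm_le_sum y : enorm y <= \sum_i `|y 0 i|.
Proof.
rewrite -(ler_pXn2r (isT : (0 < 2)%N)) ?nnegrE ?enorm_ge0 ?sumr_ge0 //.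
rewrite enorm_sqr expr2 -sum_prod_sep; apply: ler_sum => i _.
rewrite (bigD1 i) //= -expr2 real_normK ?num_real // lerDl.
by apply: sumr_ge0 => j _; rewrite mulr_ge0.
Qed.

End Enorm2.

Section Deg.
Variables (R : realType) (d : nat).
Implicit Types (p q : {mpoly R[d]}).

Definition dle p (k : nat) := forall m : 'X_{1..d}, (k < mdeg m)%N -> p@_m = 0.

Lemma dle_msize p k : dle p k <-> (msize p <= k.+1)%N.
Proof.
split=> [H|H m Hm].
  rewrite msizeE; apply/bigmax_leqP_seq => m Hm _.
  rewrite ltnS leqNgt; apply/negP => /H; apply/eqP.
  by rewrite -mcoeff_msupp.
apply: memN_msupp_eq0; apply: msize_mdeg_ge.
by apply: leq_trans H _.
Qed.

Lemma deg_le_dle p k : deg_le p k <-> dle p k.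
Proof. by rewrite dle_msize /deg_le msizeE. Qed.

Lemma dle_mono p a b : dle p a -> (a <= b)%N -> dle p b.
Proof. by move=> H hab m hm; apply: H; apply: leq_ltn_trans hab hm. Qed.

Lemma dle_mderiv i p k : dle p k -> dle (mderiv i p) k.
Proof.
move=> H m hm; rewrite mcoeff_mderiv H ?mul0rn //.
by rewrite mdegD mdeg1 addn1 ltnS ltnW.
Qed.

Lemma dle_foldr s p k : dle p k -> dle (foldr (@mderiv d R) p s) k.
Proof. by move=> H; elim: s => //= i s IH; apply: dle_mderiv. Qed.

Lemma dleD p q k : dle p k -> dle q k -> dle (p + q) k.
Proof. by move=> Hp Hq m hm; rewrite mcoeffD Hp ?Hq ?addr0. Qed.

Lemma dleZ c p k : dle p k -> dle (c *: p) k.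
Proof. by move=> Hp m hm; rewrite mcoeffZ Hp ?mulr0. Qed.

Lemma dle0 k : dle 0 k.
Proof. by move=> m _; rewrite mcoeff0. Qed.

Lemma dle_sum (I : Type) (r : seq I) (F : I -> {mpoly R[d]}) k :
  (forall i, dle (F i) k) -> dle (\sum_(i <- r) F i) k.
Proof.
move=> H; elim: r => [|i r IH]; first by rewrite big_nil; apply: dle0.
by rewrite big_cons; apply: dleD.
Qed.

Lemma dleC c : dle c%:MP 0.
Proof.
move=> m hm; rewrite mcoeffC; case: eqP => [E|]; last by rewrite mulr0.
by rewrite E mdeg0 in hm.
Qed.

Lemma dle1 : dle 1 0.
Proof. by rewrite -mpolyC1; apply: dleC. Qed.

Lemma dleX i : dle 'X_i 1.
Proof.
move=> m hm; rewrite mcoeffX; case: eqP => // E.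
by rewrite -E mdeg1 in hm.
Qed.

Lemma dleM p q a b : dle p a -> dle q b -> dle (p * q) (a + b).
Proof.
move=> Hp Hq m hm; rewrite mcoeffM big1 // => k /eqP Ek.
rewrite Ek mdegD in hm.
case: (ltnP a (mdeg k.1)) => h1; first by rewrite Hp ?mul0r.
rewrite Hq ?mulr0 //; rewrite ltnNge; apply/negP => h2.
by move: hm; rewrite ltnNge leq_add.
Qed.

Lemma dleX_pow p a n : dle p a -> dle (p ^+ n) (n * a).
Proof.
move=> H; elim: n => [|n IH]; first by rewrite expr0 mul0n; apply: dle1.
by rewrite exprS mulSn; apply: dleM.
Qed.

Lemma dle_prod (I : Type) (r : seq I) (F : I -> {mpoly R[d]}) (f : I -> nat) :
  (forall i, dle (F i) (f i)) -> dle (\prod_(i <- r) F i) (\sum_(i <- r) f i).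
Proof.
move=> H; elim: r => [|i r IH]; first by rewrite !big_nil; apply: dle1.
by rewrite !big_cons; apply: dleM.
Qed.

Lemma mderivm_const p (a : 'X_{1..d}) :
  dle p (mdeg a) -> p^`M[a] = (p@_a *+ (\prod_(i < d) (a i)`!))%:MP.
Proof.
move=> H; have H1 : (msize (p^`M[a]) <= 1)%N.
  rewrite -[1%N]/(0.+1) -dle_msize => m hm.
  rewrite mcoeff_mderivm H ?mul0rn // mdegD -[X in (X < _)%N]addn0 ltn_add2l //.
rewrite (msize1_polyC H1) mcoeff_mderivm addm0; congr (_ *+ _)%:MP.
by apply: eq_bigr => i _; rewrite ffactnn.
Qed.

End Deg.

Section FD1.
Variable (R : realType).

Definition E1 (a l : nat) : R :=
  \sum_(j < a.+1) (-1) ^+ (a - j) * ('C(a, j))%:R * (j%:R) ^+ l.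

Lemma E1_val a l : (l <= a)%N -> E1 a l = (l == a)%:R * (a`!)%:R.
Proof.
elim: a l => [|a IH] l.
  rewrite leqn0 => /eqP ->; rewrite /E1 big_ord1 /=.
  by rewrite !expr0 bin0 fact0 mulr1.
case: l => [_|l hl].
  rewrite /E1 mul0r.
  transitivity ((-1 + 1 : R) ^+ a.+1); last by rewrite addNr expr0n.
  rewrite exprDn; apply: eq_bigr => j _.
  by rewrite expr1n expr0 !mulr1 mulr_natr.
rewrite /E1 big_ord_recl /= expr0n /= mulr0 add0r.
rewrite (eq_bigr (fun i : 'I_a.+1 =>
   (a.+1)%:R * \sum_(t < l.+1) ('C(l, t))%:R *
      ((-1) ^+ (a - i) * ('C(a, i))%:R * (i%:R) ^+ t))); last first.
  move=> i _; rewrite /bump /= add1n subSS.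
  have Hb : ((i.+1 * 'C(a.+1, i.+1))%:R : R) = (a.+1 * 'C(a, i))%:R.
    by rewrite -mul_bin_diag.
  transitivity ((-1 : R) ^+ (a - i) * ((i.+1 * 'C(a.+1, i.+1))%:R) * (i%:R + 1) ^+ l).
    by rewrite exprS natrM -(addn1 i) natrD; ring.
  rewrite Hb exprD1n natrM mulr_sumr mulr_sumr; apply: eq_bigr => t _.
  rewrite mulr_natr; ring.
rewrite -mulr_sumr exchange_big /=.
rewrite (eq_bigr (fun t : 'I_l.+1 => ('C(l, t))%:R * E1 a t)); last first.
  by move=> t _; rewrite /E1 mulr_sumr.
rewrite big_ord_recr /= IH ?binn ?mul1r; last by rewrite -ltnS.
rewrite big1 ?add0r; last first.
  move=> t _; rewrite IH ?(eqn_leq t a) //=.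
    have : (t < a)%N by apply: leq_trans (ltn_ord t) _; rewrite -ltnS.
    by move=> ht; rewrite (leqNgt a t) ht andbF mul0r mulr0.
  by apply: leq_trans (ltnW (ltn_ord t)) _; rewrite -ltnS.
rewrite eqSS factS natrM; case: (l == a); rewrite ?mul0r ?mulr0 //; ring.
Qed.

Definition S1 (a n : nat) (w h : R) : R :=
  \sum_(j < a.+1) (-1) ^+ (a - j) * ('C(a, j))%:R * (w + h * j%:R) ^+ n.

Lemma S1_val a n w h : (n <= a)%N -> S1 a n w h = (n == a)%:R * (a`!)%:R * h ^+ a.
Proof.
move=> hn; rewrite /S1.
rewrite (eq_bigr (fun j : 'I_a.+1 => \sum_(l < n.+1) ('C(n, l))%:R * w ^+ (n - l) * h ^+ l *
    ((-1) ^+ (a - j) * ('C(a, j))%:R * (j%:R) ^+ l))); last first.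
  move=> j _; rewrite exprDn mulr_sumr; apply: eq_bigr => l _.
  rewrite exprMn mulr_natr; ring.
rewrite exchange_big /=.
rewrite (eq_bigr (fun l : 'I_n.+1 => ('C(n, l))%:R * w ^+ (n - l) * h ^+ l * E1 a l)); last first.
  by move=> l _; rewrite /E1 mulr_sumr.
rewrite big_ord_recr /= E1_val // binn subnn expr0 mul1r.
rewrite big1 ?add0r; last first.
  move=> l _; rewrite E1_val; last by apply: leq_trans (ltnW (ltn_ord l)) hn.
  have : (l < a)%N by apply: leq_trans (ltn_ord l) hn.
  by rewrite ltn_neqAle => /andP [/negbTE -> _]; rewrite !mul0r mulr0.
by case: eqP => [->|_]; rewrite ?mul0r //; ring.
Qed.

Lemma S1_wide (K a n : nat) w h : (a <= K)%N ->
  \sum_(j < K.+1) (-1) ^+ (a - j) * ('C(a, j))%:R * (w + h * j%:R) ^+ n = S1 a n w h.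
Proof.
move=> haK; rewrite /S1 (@big_ord_widen _ _ _ a.+1 K.+1 (fun j => (-1) ^+ (a - j) * ('C(a, j))%:R * (w + h * j%:R) ^+ n)) //.
rewrite [RHS]big_mkcond /=; apply: eq_bigr => j _.
by case: ltnP => // h1; rewrite bin_small // mulr0 mul0r.
Qed.

End FD1.

Section FD.
Variables (R : realType) (d k : nat).
Implicit Types (Q : {mpoly R[d]}) (a m : 'X_{1..d}).

Definition gvec (g : {ffun 'I_d -> 'I_k.+1}) : 'rV[R]_d := \row_i ((g i : nat)%:R).

Definition coefFD a (g : {ffun 'I_d -> 'I_k.+1}) : R :=
  \prod_i ((-1) ^+ (a i - g i) * ('C(a i, g i))%:R).

Definition FD Q a (w : 'rV[R]_d) (h : R) : R :=
  \sum_(g : {ffun 'I_d -> 'I_k.+1}) coefFD a g * peval Q (w + h *: gvec g).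

Lemma mdeg_coord_le a i : (a i <= mdeg a)%N.
Proof. by rewrite mdegE (bigD1 i) //= leq_addr. Qed.

Lemma mnm_eq_of_le a m : (forall i, (a i <= m i)%N) -> (mdeg m <= mdeg a)%N -> m = a.
Proof.
move=> H hdeg; apply/mnmP => i; apply/eqP; rewrite eqn_leq H andbT.
move: hdeg; rewrite !mdegE (bigD1 i) //= [X in (_ <= X)%N](bigD1 i) //=.
move=> h2; have h3 : (\sum_(j < d | j != i) a j <= \sum_(j < d | j != i) m j)%N.
  by apply: leq_sum => j _; apply: H.
have := leq_trans h2 (leq_add (leqnn (a i)) h3).
by rewrite leq_add2r.
Qed.

Lemma FD_val Q a w h : dle Q k -> mdeg a = k ->
  FD Q a w h = Q@_a * (\prod_i (a i)`!)%:R * h ^+ k.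
Proof.
move=> HQ ha; rewrite /FD.
have Hai i : (a i <= k)%N by rewrite -ha mdeg_coord_le.
transitivity (\sum_(m <- msupp Q) Q@_m *
   \prod_i S1 (a i) (m i) (w 0 i) h).
  transitivity (\sum_(m <- msupp Q) Q@_m * \sum_(g : {ffun 'I_d -> 'I_k.+1})
     \prod_i ((-1) ^+ (a i - g i) * ('C(a i, g i))%:R * (w 0 i + h * (g i : nat)%:R) ^+ (m i))).
    under eq_bigr => g _ do rewrite /peval mevalE mulr_sumr.
    rewrite exchange_big /=; apply: eq_bigr => m _; rewrite mulr_sumr.
    apply: eq_bigr => g _.
    rewrite /coefFD mulrCA; congr (_ * _); rewrite -big_split /=.
    by apply: eq_bigr => i _; rewrite !mxE.
  apply: eq_bigr => m _; congr (_ * _).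
  rewrite -(bigA_distr_bigA (fun i (j : 'I_k.+1) =>
     (-1) ^+ (a i - j) * ('C(a i, j))%:R * (w 0 i + h * (j : nat)%:R) ^+ (m i))) /=.
  apply: eq_bigr => i _.
  by rewrite (@S1_wide R k (a i) (m i) (w 0 i) h (Hai i)).
transitivity (\sum_(m <- msupp Q) (m == a)%:R * (Q@_a * (\prod_i (a i)`!)%:R * h ^+ k)).
  apply: eq_big_seq => m hm.
  have hmd : (mdeg m <= k)%N.
    by rewrite -ltnS; apply: leq_trans (msize_mdeg_lt hm) _; apply/dle_msize.
  have [->|hne] := eqVneq m a.
    rewrite mul1r (eq_bigr (fun i => (a i)`!%:R * h ^+ (a i))); last first.
      by move=> i _; rewrite S1_val // eqxx mul1r.
    rewrite big_split /= -natr_prod -expr_sum -mdegE ha; ring.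
  have [i hi] : exists i, (m i < a i)%N.
    apply/existsP; rewrite -[X in is_true X]negbK negb_exists; apply/negP => /forallP H.
    move/eqP: hne; apply; apply: mnm_eq_of_le; last by rewrite ha.
    move=> i.
    by move: (H i); rewrite -leqNgt.
  rewrite (bigD1 i) //= S1_val ?(ltnW hi) //.
  by rewrite (ltn_eqF hi) /= !mul0r mulr0.
case: (boolP (a \in msupp Q)) => ha_in.
  set X := Q@_a * _ * _.
  rewrite (bigD1_seq a) ?msupp_uniq //= eqxx mul1r big1 ?addr0 // => m /negbTE ->.
  by rewrite mul0r.
rewrite big1_seq ?(memN_msupp_eq0 ha_in) ?mul0r // => m /= hm.
have -> : (m == a) = false by apply/negbTE; apply: contraNneq ha_in => <-.
by rewrite mul0r.
Qed.

End FD.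

Section Comp.
Variables (R : realType) (d : nat).
Implicit Types (P : {mpoly R[d]}).

Definition lqt (c : R) (x : 'rV[R]_d) : d.-tuple {mpoly R[d]} :=
  [tuple c *: ('X_i - (x 0 i)%:MP) | i < d].

Definition ptil c x P := P \mPo (lqt c x).

Lemma peval_ptil c x P z : peval (ptil c x P) z = peval P (c *: (z - x)).
Proof.
rewrite /peval /ptil comp_mpoly_meval; apply: meval_eq => i.
by rewrite tnth_mktuple mevalZ mevalB mevalXU mevalC !mxE.
Qed.

Lemma dle_sum_seq (I : eqType) (r : seq I) (F : I -> {mpoly R[d]}) k :
  (forall i, i \in r -> dle (F i) k) -> dle (\sum_(i <- r) F i) k.
Proof.
elim: r => [|i r IH] H; first by rewrite big_nil; apply: dle0.
rewrite big_cons; apply: dleD; first by apply: H; rewrite mem_head.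
by apply: IH => j hj; apply: H; rewrite in_cons hj orbT.
Qed.

Lemma dleN P k : dle P k -> dle (- P) k.
Proof. by move=> H m hm; rewrite mcoeffN H ?oppr0. Qed.

Lemma dle_ptil c x P k : dle P k -> dle (ptil c x P) k.
Proof.
move=> HP; rewrite /ptil comp_mpolyEX; apply: dle_sum_seq => m hm.
apply: dleZ; rewrite comp_mpolyX.
have hmd : (mdeg m <= k)%N.
  by rewrite -ltnS; apply: leq_trans (msize_mdeg_lt hm) _; apply/dle_msize.
apply: (dle_mono (a := \sum_(i < d) (m i * 1)%N)); last first.
  by rewrite (eq_bigr (fun i => m i)) ?mdegE -?mdegE // => i _; rewrite muln1.
apply: dle_prod => i; apply: dleX_pow.
rewrite tnth_mktuple; apply: dleZ; apply: dleD; first exact: dleX.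
by apply: dleN; apply: (dle_mono (dleC _)).  
Qed.

End Comp.

Section SupB.
Variables (R : realType) (d : nat).
Implicit Types (P : {mpoly R[d]}).

Lemma peval_bounded P (B : R) :
  exists M : R, forall y : 'rV[R]_d, (forall i, `|y 0 i| <= B) -> `|peval P y| <= M.
Proof.
exists (\sum_(m <- msupp P) `|P@_m| * \prod_i `|B| ^+ (m i)) => y Hy.
rewrite /peval mevalE; apply: le_trans (ler_norm_sum _ _ _) _.
apply: ler_sum => m _; rewrite normrM normr_prod ler_wpM2l //.
apply: ler_prod => i _; rewrite normrX exprn_ge0 ?normr_ge0 //=.
apply: lerXn2r; rewrite ?nnegrE //.
by apply: le_trans (Hy i) (ler_norm _).
Qed.

Lemma sup_ge_elem (T : Type) (E : set T) (f : T -> R) y :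
  has_ubound [set f u | u in E] -> E y -> f y <= sup [set f u | u in E].
Proof. by move=> H Ey; apply: ub_le_sup => //; exists y. Qed.

Lemma sup_le_bound (T : Type) (E : set T) (f : T -> R) y0 (X : R) :
  E y0 -> (forall y, E y -> f y <= X) -> sup [set f u | u in E] <= X.
Proof.
move=> E0 H; apply: ge_sup; first by exists (f y0), y0.
by move=> _ [y Ey <-]; apply: H.
Qed.

Lemma sup_mono (T : Type) (E F : set T) (f : T -> R) y0 :
  E `<=` F -> E y0 -> has_ubound [set f u | u in F] ->
  sup [set f u | u in E] <= sup [set f u | u in F].
Proof.
move=> EF E0 HF; apply: sup_le.
- by move=> _ [y Ey <-]; exists (f y); split => //; exists y => //; apply: EF.
- by exists (f y0), y0.
- by split => //; exists (f y0), y0 => //; apply: EF.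
Qed.

Lemma cball_coord (z y : 'rV[R]_d) t i : cball z t y -> `|y 0 i| <= enorm z + t.
Proof.
rewrite /cball /= => hy.
have -> : y 0 i = (y - z) 0 i + z 0 i by rewrite !mxE subrK.
apply: le_trans (ler_normD _ _) _; rewrite addrC lerD ?enorm_coord //.
by apply: le_trans (enorm_coord _ _) hy.
Qed.

Lemma hub_ball P (z : 'rV[R]_d) t (A : set 'rV[R]_d) :
  has_ubound [set `|peval P u| | u in cball z t `&` A].
Proof.
have [M HM] := peval_bounded P (enorm z + t).
exists M => _ [u [hu _] <-]; apply: HM => i; exact: cball_coord hu.
Qed.

Lemma hub_r P (r : R) (A : set 'rV[R]_d) :
  has_ubound [set `|peval P u| | u in A `&` [set y | enorm y <= r]].
Proof.
have [M HM] := peval_bounded P r.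
exists M => _ [u [_ hu] <-]; apply: HM => i; exact: le_trans (enorm_coord _ _) hu.
Qed.

Lemma cball_center (z : 'rV[R]_d) t : 0 <= t -> cball z t z.
Proof. by move=> ht; rewrite /cball /= subrr enorm0. Qed.

Lemma cball_trans (z y u : 'rV[R]_d) s t :
  cball z s y -> cball y t u -> cball z (t + s) u.
Proof.
rewrite /cball /= => h1 h2.
have -> : u - z = (u - y) + (y - z) by rewrite addrA subrK.
by apply: le_trans (enorm_triangle _ _) _; rewrite lerD.
Qed.

End SupB.

Section Iter.
Variables (R : realType) (d : nat) (K : set 'rV[R]_d) (eps0 : R) (c : nat -> R).
Hypothesis c1 : forall k, 1 <= c k.
Hypothesis HL : forall (k : nat) (P : {mpoly R[d]}), deg_le P k ->
  forall eps : R, 0 < eps -> eps < eps0 ->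
  forall x0, K x0 ->
    grad_norm P x0 <= c k * eps^-1 *
      sup [set `|peval P y| | y in cball x0 eps `&` K].

Lemma iter_bound k (δ : R) (Q : {mpoly R[d]}) (s : seq 'I_d) :
  0 < δ -> δ < eps0 -> dle Q k -> forall z, K z ->
  `|peval (foldr (@mderiv d R) Q s) z| <=
    (c k / δ) ^+ (size s) *
      sup [set `|peval Q u| | u in cball z ((size s)%:R * δ) `&` K].
Proof.
move=> hδ hδ0 HQ; have hc : 0 <= c k / δ.
  by rewrite divr_ge0 ?(ltW hδ) // (le_trans ler01 (c1 k)).
elim: s => [|i s IH] z Kz.
  rewrite /= expr0 mul1r; apply: (sup_ge_elem (hub_ball _ _ _ _)).
  by split => //; apply: cball_center; rewrite mul0r.
set Rr := foldr (@mderiv d R) Q s.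
rewrite /= -/Rr.
have h1 : `|peval (mderiv i Rr) z| <= grad_norm Rr z.
  exact: (le_sqrt_sum (fun j => peval (mderiv j Rr) z) i).
apply: le_trans h1 _.
have HR : deg_le Rr k by apply/deg_le_dle; apply: dle_foldr.
apply: le_trans (HL HR hδ hδ0 Kz) _.
rewrite exprS -(mulrA (c k / δ)); apply: (ler_wpM2l hc).
apply: (sup_le_bound (y0 := z)); first by split => //; apply: cball_center; apply: ltW.
move=> y [hy Ky]; apply: le_trans (IH y Ky) _.
apply: (ler_wpM2l (exprn_ge0 _ hc)).
apply: (sup_mono (y0 := y)); last exact: hub_ball.
  move=> u [hu Ku]; split => //.
  have := cball_trans hy hu; rewrite /cball /= => H.
  by apply: le_trans H _; rewrite -addn1 natrD mulrDl mul1r.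
by split => //; apply: cball_center; rewrite mulr_ge0 ?ler0n ?ltW.
Qed.

End Iter.

Section FDB.
Variables (R : realType) (d k : nat).

Lemma bin_le_fact n m : ('C(n, m) <= n`!)%N.
Proof.
case: (leqP m n) => h; last by rewrite bin_small.
by rewrite -(bin_fact h) leq_pmulr // muln_gt0 !fact_gt0.
Qed.

Lemma coefFD_bound (a : 'X_{1..d}) (g : {ffun 'I_d -> 'I_k.+1}) :
  (forall i, (a i <= k)%N) -> `|coefFD R a g| <= ((k`!) ^ d)%:R.
Proof.
move=> Ha; rewrite /coefFD normr_prod natrX.
have -> : (k`!)%:R ^+ d = \prod_(i < d) ((k`!)%:R : R) by rewrite prodr_const card_ord.
apply: ler_prod => i _; rewrite normr_ge0 /= normrM normrX normrN1 expr1n mul1r.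
rewrite normr_nat ler_nat; apply: leq_trans (bin_le_fact _ _) _.
exact: leq_fact.
Qed.

Lemma coefFD_zero (a : 'X_{1..d}) (g : {ffun 'I_d -> 'I_k.+1}) i :
  (a i < g i)%N -> coefFD R a g = 0.
Proof.
by move=> h; rewrite /coefFD (bigD1 i) //= bin_small // mulr0 mul0r.
Qed.

Lemma FD_bound (Q : {mpoly R[d]}) (a : 'X_{1..d}) w h (X : R) :
  mdeg a = k -> 0 <= X ->
  (forall g : {ffun 'I_d -> 'I_k.+1}, (forall i, (g i <= a i)%N) ->
     `|peval Q (w + h *: gvec R g)| <= X) ->
  `|FD k Q a w h| <= ((k.+1) ^ d * (k`!) ^ d)%:R * X.
Proof.
move=> ha hX H.
have Hai i : (a i <= k)%N by rewrite -ha mdeg_coord_le.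
rewrite /FD; apply: le_trans (ler_norm_sum _ _ _) _.
apply: le_trans (_ : _ <= \sum_(g : {ffun 'I_d -> 'I_k.+1}) ((k`!) ^ d)%:R * X) _.
  apply: ler_sum => g _; rewrite normrM.
  case: (boolP [forall i, (g i <= a i)%N]) => [/forallP hg|].
    apply: ler_pM => //; first exact: coefFD_bound.
    exact: H.
  rewrite negb_forall => /existsP [i]; rewrite -ltnNge => hi.
  by rewrite (coefFD_zero hi) normr0 mul0r mulr_ge0 ?ler0n.
rewrite sumr_const card_ffun !card_ord -mulr_natl natrM; lra.
Qed.

End FDB.

Section Misc.
Variables (R : realType) (d : nat).

Lemma size_s (a : 'X_{1..d}) :
  size (flatten [seq nseq (a i) i | i <- enum 'I_d]) = mdeg a.
Proof.
rewrite size_flatten /shape sumnE !big_map -enumT big_enum mdegE /=.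
by apply: eq_bigr => i _; rewrite size_nseq.
Qed.

Lemma mnm_ofE k (f : {ffun 'I_d -> 'I_k}) i : mnm_of f i = f i.
Proof. by rewrite /mnm_of multinomE tnth_mktuple. Qed.

Lemma mdeg_mnm_of k (f : {ffun 'I_d -> 'I_k}) : mdeg (mnm_of f) = (\sum_(i < d) (f i : nat))%N.
Proof. by rewrite mdegE; apply: eq_bigr => i _; rewrite mnm_ofE. Qed.

Lemma factN_gt0 (a : 'X_{1..d}) : (0 < \prod_(i < d) (a i)`!)%N.
Proof. by apply: prodn_gt0 => i; apply: fact_gt0. Qed.

Lemma lhs_term (P : {mpoly R[d]}) (a : 'X_{1..d}) : dle P (mdeg a) ->
  `|peval (pderiv a P) 0| / (mfact a)%:R = `|P@_a|.
Proof.
move=> H; rewrite /pderiv /peval mderivm_const // mevalC normrMn /mfact.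
rewrite -[`|P@_a| *+ _]mulr_natr mulfK // pnatr_eq0 -lt0n; exact: factN_gt0.
Qed.

End Misc.

Section Main.
Variables (R : realType) (d : nat) (K : set 'rV[R]_d) (eps0 : R) (c : nat -> R).
Hypothesis heps0 : 0 < eps0.
Hypothesis c1 : forall k, 1 <= c k.
Hypothesis HL : forall (k : nat) (P : {mpoly R[d]}), deg_le P k ->
  forall eps : R, 0 < eps -> eps < eps0 ->
  forall x0, K x0 ->
    grad_norm P x0 <= c k * eps^-1 *
      sup [set `|peval P y| | y in cball x0 eps `&` K].

Definition C1 (k : nat) : R :=
  ((k.+1) ^ d * (k`!) ^ d)%:R * (2 * k%:R) ^+ k + (c k * (k%:R + 4 / eps0)) ^+ k.

Lemma C1_ge k : ((k.+1) ^ d * (k`!) ^ d)%:R * (2 * k%:R) ^+ k <= C1 k.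
Proof.
rewrite /C1 lerDl exprn_ge0 // mulr_ge0 ?addr_ge0 ?divr_ge0 ?ler0n ?(ltW heps0) //.
exact: le_trans ler01 (c1 k).
Qed.

Lemma C1_ge2 k : (c k * (k%:R + 4 / eps0)) ^+ k <= C1 k.
Proof. by rewrite /C1 lerDr mulr_ge0 ?exprn_ge0 ?ler0n // mulr_ge0 ?ler0n. Qed.

Lemma C1_gt0 k : 0 < C1 k.
Proof.
apply: lt_le_trans (C1_ge2 k); apply: exprn_gt0; apply: mulr_gt0.
  exact: lt_le_trans ltr01 (c1 k).
by apply: ltr_wpDl; rewrite ?ler0n // divr_gt0.
Qed.

Variables (k : nat) (a : 'X_{1..d}) (P : {mpoly R[d]}) (eps : R) (x : 'rV[R]_d) (r : R).
Hypotheses (ha : mdeg a = k) (HP : dle P k) (he : 0 < eps) (he1 : eps < 1)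
  (Kx : K x) (hr : 0 < r).

Let S := sup [set `|peval P y| | y in Aset K x eps `&` [set y | enorm y <= r]].

Lemma elemS y : Aset K x eps y -> enorm y <= r -> `|peval P y| <= S.
Proof. by move=> h1 h2; apply: (sup_ge_elem (hub_r _ _ _)). Qed.

Lemma S_ge0 : 0 <= S.
Proof.
apply: le_trans (normr_ge0 (peval P 0)) _; apply: elemS; last by rewrite enorm0 ltW.
by left; exists x => //; rewrite subrr scaler0.
Qed.

Let N : R := (\prod_(i < d) (a i)`!)%:R.

Lemma N_ge1 : 1 <= N.
Proof. by rewrite /N ler1n; exact: factN_gt0. Qed.

Lemma FDa (w : 'rV[R]_d) (h : R) :
  (forall g : {ffun 'I_d -> 'I_k.+1}, (forall i, (g i <= a i)%N) ->
     Aset K x eps (w + h *: gvec R g) /\ enorm (w + h *: gvec R g) <= r) ->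
  `|P@_a| * N * `|h| ^+ k <= ((k.+1) ^ d * (k`!) ^ d)%:R * S.
Proof.
move=> Hg.
have HF := FD_bound (Q := P) (w := w) (h := h) ha S_ge0.
rewrite (FD_val w h HP ha) -/N in HF.
rewrite -normrX -(ger0_norm (le_trans ler01 N_ge1)) -!normrM.
apply: HF => g hg; have [h1 h2] := Hg g hg; exact: elemS.
Qed.

Lemma fromFDa (w : 'rV[R]_d) (h : R) : 0 < h ->
  r ^+ k <= (2 * k%:R) ^+ k * h ^+ k ->
  (forall g : {ffun 'I_d -> 'I_k.+1}, (forall i, (g i <= a i)%N) ->
     Aset K x eps (w + h *: gvec R g) /\ enorm (w + h *: gvec R g) <= r) ->
  `|P@_a| * r ^+ k <= C1 k * S.
Proof.
move=> hh hrk Hg; have H := FDa Hg; rewrite (ger0_norm (ltW hh)) in H.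
have hN := N_ge1; have hS := S_ge0.
apply: le_trans (_ : _ <= `|P@_a| * ((2 * k%:R) ^+ k * h ^+ k)) _.
  by rewrite ler_wpM2l.
apply: le_trans (_ : _ <= `|P@_a| * N * h ^+ k * (2 * k%:R) ^+ k) _.
  have -> : `|P@_a| * N * h ^+ k * (2 * k%:R) ^+ k =
     (`|P@_a| * ((2 * k%:R) ^+ k * h ^+ k)) * N by ring.
  apply: ler_peMr => //; apply: mulr_ge0 => //; apply: mulr_ge0; apply: exprn_ge0.
    by apply: mulr_ge0.
  exact: ltW.
apply: le_trans (_ : _ <= ((k.+1) ^ d * (k`!) ^ d)%:R * S * (2 * k%:R) ^+ k) _.
  by apply: ler_wpM2r; [rewrite exprn_ge0 // mulr_ge0 | exact: H].
by rewrite mulrAC; apply: ler_wpM2r => //; apply: C1_ge.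
Qed.

Lemma caseA : (k = 0%N \/ 2 / eps <= r) -> `|P@_a| * r ^+ k <= C1 k * S.
Proof.
have Hai i : (a i <= k)%N by rewrite -ha mdeg_coord_le.
have [hk0|hk] := eqVneq k 0%N.
  move=> _; apply: (@fromFDa 0 1 ltr01); first by rewrite hk0 !expr0 mulr1.
  move=> g hg.
  have -> : gvec R g = 0.
    apply/rowP => i; rewrite !mxE.
    have h4 : (g i <= 0)%N by apply: leq_trans (leq_trans (hg i) (Hai i)) _; rewrite hk0.
    by move: h4; rewrite leqn0 => /eqP ->.
  rewrite scaler0 addr0 enorm0 ltW //; split => //.
  by left; exists x => //; rewrite subrr scaler0.
case=> [/eqP|hr2]; first by rewrite (negbTE hk).
have [i0 hi0] : exists i0, (0 < a i0)%N.
  apply/existsP; rewrite -[X in is_true X]negbK negb_exists; apply/negP => /forallP H0.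
  move: hk; rewrite -ha mdegE big1 ?eqxx // => i _.
  by move: (H0 i); rewrite lt0n negbK => /eqP.
have hkpos : 0 < k%:R :> R by rewrite ltr0n lt0n.
set h := r / (2 * k%:R).
have hh : 0 < h by rewrite /h divr_gt0 // mulr_gt0.
have h2k : h * (2 * k%:R) = r by rewrite /h divfK // mulf_neq0 // gt_eqF.
have hkh : h * k%:R = r / 2.
  by rewrite -h2k; field.
apply: (@fromFDa ((r / 2) *: delta_mx 0 i0) h hh).
  by rewrite -exprMn mulrC h2k.
move=> g hg.
have Hpt j : (r / 2 *: delta_mx 0 i0 + h *: gvec R g) 0 j =
    r / 2 * (j == i0)%:R + h * (g j)%:R.
  by rewrite !mxE eqxx /= eq_sym.
have Hpt0 j : 0 <= (r / 2 *: delta_mx 0 i0 + h *: gvec R g) 0 j.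
  by rewrite Hpt addr_ge0 // mulr_ge0 ?ler0n // ?(ltW hh) // divr_ge0 // ltW.
split.
  right => /=; apply: le_trans (enorm_coord _ i0).
  rewrite ger0_norm // Hpt eqxx mulr1.
  have : 0 <= h * (g i0)%:R by rewrite mulr_ge0 ?ler0n ?ltW.
  move: hr2; rewrite /= => hr2.
  have : 2 / eps = 2 * eps^-1 by [].
  lra.
apply: le_trans (enorm_le_sum _) _.
have Hs : \sum_j `|(r / 2 *: delta_mx 0 i0 + h *: gvec R g) 0 j| =
    r / 2 + h * (\sum_j (g j : nat))%:R.
  rewrite (eq_bigr (fun j => r / 2 * (j == i0)%:R + h * (g j)%:R)); last first.
    by move=> j _; rewrite (ger0_norm (Hpt0 j)) Hpt.
  rewrite big_split /= -!mulr_sumr natr_sum (bigD1 i0) //= eqxx big1 ?addr0 ?mulr1 //.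
  by move=> j /negbTE ->.
rewrite Hs.
have hsum : (\sum_j (g j : nat) <= k)%N.
  apply: (@leq_trans (mdeg a)); last by rewrite ha.
  by rewrite mdegE; apply: leq_sum => j _; exact: hg j.
have : h * (\sum_j (g j : nat))%:R <= h * k%:R.
  by rewrite ler_pM2l // ler_nat.
lra.
Qed.

Lemma caseB : r < 2 / eps -> `|P@_a| * r ^+ k <= C1 k * S.
Proof.
move=> hr2.
have hc0 : 0 < c k by apply: lt_le_trans ltr01 (c1 k).
set M := k%:R + 4 / eps0.
have hM4 : 4 / eps0 <= M by rewrite /M lerDr ler0n.
have hMk : k%:R <= M by rewrite /M lerDl divr_ge0 ?(ltW heps0).
have hM0 : 0 < M by apply: lt_le_trans hM4; rewrite divr_gt0.
set δ := eps * r / M.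
have hδ : 0 < δ by rewrite /δ divr_gt0 // mulr_gt0.
have her : eps * r < 2 by rewrite mulrC -ltr_pdivlMr.
have hδ0 : δ < eps0.
  rewrite /δ ltr_pdivrMr //.
  have h4 : eps0 * (4 / eps0) = 4 by rewrite mulrC divfK // gt_eqF.
  have : eps0 * (4 / eps0) <= eps0 * M by rewrite ler_pM2l.
  lra.
have hkδ : k%:R * δ <= eps * r.
  rewrite /δ mulrCA -[X in _ <= X]mulr1 ler_pM2l ?mulr_gt0 //.
  by rewrite ler_pdivrMr // mul1r.
set Q := ptil eps^-1 x P.
have HQ : dle Q k by apply: dle_ptil.
set s := flatten [seq nseq (a i) i | i <- enum 'I_d].
have hs : size s = k by rewrite size_s.
have Hit := @iter_bound R d K eps0 c c1 HL k δ Q s hδ hδ0 HQ x Kx.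
have E : foldr (@mderiv d R) Q s = Q^`M[a] by rewrite mderivm_foldr.
rewrite E hs /peval mderivm_const ?ha // mevalC -/(peval _ _) in Hit.
have Hsup : sup [set `|peval Q u| | u in cball x (k%:R * δ) `&` K] <= S.
  apply: (sup_le_bound (y0 := x)).
    by split => //; apply: cball_center; rewrite mulr_ge0 ?ler0n ?ltW.
  move=> u [hu Ku]; rewrite peval_ptil; apply: elemS; first by left; exists u.
  rewrite enormZ ger0_norm; last by rewrite invr_ge0 ltW.
  rewrite ler_pdivrMl //.
  by apply: le_trans hu _; apply: le_trans hkδ _.
have HQa : Q@_a * N = P@_a * N * eps^-1 ^+ k.
  have F1 := FD_val x 1 HQ ha; have F2 := FD_val 0 eps^-1 HP ha.
  rewrite expr1n mulr1 in F1; rewrite -F1 -F2 /FD; apply: eq_bigr => g _.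
  rewrite peval_ptil scale1r add0r; congr (_ * peval P (_ *: _)).
  by rewrite addrAC subrr add0r.
have hcd : c k / δ = c k * M / (eps * r).
  by rewrite /δ; field; rewrite ?gt_eqF ?mulr_gt0 //.
have hN := N_ge1.
have hN0 : 0 <= N by apply: le_trans ler01 hN.
have H1 : `|P@_a| * N * eps^-1 ^+ k <= (c k * M / (eps * r)) ^+ k * S.
  have -> : `|P@_a| * N * eps^-1 ^+ k = `|Q@_a *+ (\prod_(i < d) (a i)`!)|.
    rewrite -mulr_natr -/N HQa !normrM (ger0_norm hN0) (@ger0_norm _ (eps^-1 ^+ k)) //.
    by rewrite exprn_ge0 // invr_ge0 ltW.
  apply: le_trans Hit _; rewrite -hcd; apply: ler_wpM2l => //.
  by rewrite exprn_ge0 // divr_ge0 ?ltW.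
have e1 : `|P@_a| * N * r ^+ k = (`|P@_a| * N * eps^-1 ^+ k) * (eps * r) ^+ k.
  by rewrite exprMn exprVn; field; rewrite expf_neq0 // gt_eqF.
have e2 : (c k * M / (eps * r)) ^+ k * S * (eps * r) ^+ k = (c k * M) ^+ k * S.
  by rewrite expr_div_n; field; rewrite expf_neq0 // mulf_neq0 // gt_eqF.
apply: le_trans (_ : _ <= `|P@_a| * N * r ^+ k) _.
  rewrite [X in _ <= X]mulrAC; apply: ler_peMr => //.
  by apply: mulr_ge0 => //; apply: exprn_ge0; apply: ltW.
rewrite e1; apply: le_trans (_ : _ <= (c k * M / (eps * r)) ^+ k * S * (eps * r) ^+ k) _.
  by apply: ler_wpM2r => //; rewrite exprn_ge0 // mulr_ge0 ?ltW.
by rewrite e2; apply: ler_wpM2r; [exact: S_ge0 | exact: C1_ge2].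
Qed.

End Main.

Theorem lemma7 (R : realType) (d : nat) (K : set 'rV[R]_d) :
  compact K -> LMI1 K ->
  forall k : nat, exists Ck : R, 0 < Ck /\
  forall (eps : R), 0 < eps -> eps < 1 ->
  forall x, bdry K x ->
  forall r : R, 0 < r ->
  forall P : mpoly.mpoly d R, deg_le P k ->
    \sum_(f : {ffun 'I_d -> 'I_k.+1} | (\sum_(i < d) (f i : nat))%N == k)
        `|peval (pderiv (mnm_of f) P) 0| / (mfact (mnm_of f))%:R
      <= Ck / r ^+ k *
         sup [set `|peval P y| | y in Aset K x eps `&` [set y | enorm y <= r]].
Proof.
move=> hK [eps0 [heps0 [c [c1 HL]]]] k.
have hC := C1_gt0 d heps0 c1 k.
exists (((k.+1) ^ d)%:R * C1 d eps0 c k); split.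
  by rewrite mulr_gt0 // ltr0n expn_gt0.
move=> eps he he1 x hx r hr P HPk.
have cK : closed K by apply: compact_closed => //; apply: norm_hausdorff.
have Kx : K x.
  by case: hx => hcl _; move: hcl; rewrite -(proj1 (closure_id K) cK).
have HP : dle P k by apply/deg_le_dle.
set S := sup _.
have hS : 0 <= S by apply: (S_ge0 P eps Kx hr).
have hrk : 0 < r ^+ k by apply: exprn_gt0.
have Hterm : forall f : {ffun 'I_d -> 'I_k.+1}, (\sum_(i < d) (f i : nat))%N == k ->
   `|peval (pderiv (mnm_of f) P) 0| / (mfact (mnm_of f))%:R <= C1 d eps0 c k * S / r ^+ k.
  move=> f /eqP hf.
  have ha : mdeg (mnm_of f) = k by rewrite mdeg_mnm_of.
  rewrite lhs_term ?ha // ler_pdivlMr //.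
  case: (ltP r (2 / eps)) => hr2.
    exact: (caseB heps0 c1 HL ha HP he Kx hr hr2).
  exact: (caseA heps0 c1 ha HP Kx hr (or_intror hr2)).
apply: le_trans (ler_sum _ Hterm) _.
apply: le_trans (_ : _ <= \sum_(f : {ffun 'I_d -> 'I_k.+1}) C1 d eps0 c k * S / r ^+ k) _.
  rewrite [X in _ <= X](bigID (fun f : {ffun 'I_d -> 'I_k.+1} => (\sum_(i < d) (f i : nat))%N == k)) /=.
  rewrite lerDl; apply: sumr_ge0 => f _; apply: divr_ge0; last exact: ltW.
  by apply: mulr_ge0 => //; apply: ltW.
rewrite sumr_const card_ffun !card_ord.
by rewrite le_eqVlt; apply/orP; left; apply/eqP; rewrite -[X in X = _]mulr_natl; ring.
Qed.
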